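(* Let $\phi$ and $\psi$ be Drinfeld modules over $K$ with $\operatorname{rk}\phi>\operatorname{rk}\psi$, and put $n=\operatorname{rk}\phi$. Let $K\{\tau\}_{<n}=\{w\in K\{\tau\}\mid \deg_\tau w<n\}$. Then there is an $\mathbb F_q$-linear isomorphism $\operatorname{Ext}^1_\tau(\phi,\psi)\cong K\{\tau\}_{<n}$; namely, the map sending $w\in K\{\tau\}_{<n}$ to the class of the biderivation $\delta$ with $\delta(t)=w$ is an isomorphism of $\mathbb F_q$-vector spaces $K\{\tau\}_{<n}\to \mathrm{Der}(\phi,\psi)/\mathrm{Der}_{in}(\phi,\psi)$.
   Context: Let $q$ be a power of a prime $p$, $A=\mathbb F_q[t]$, and $K$ a field of characteristic $p$ with an $\mathbb F_q$-algebra homomorphism $\iota:A\to K$; put $\theta=\iota(t)$. $K\{\tau\}$ is the ring of twisted polynomials $\sum_i a_i\tau^i$ ($a_i\in K$) with $\tau x=x^q\tau$; write $c^{(i)}=c^{q^i}$. A $\mathbf t$-module of dimension $d$ over $K$ is an $\mathbb F_q$-algebra homomorphism $\Phi:\mathbb F_q[t]\to \mathrm{Mat}_d(K\{\tau\})$ with $\Phi_t:=\Phi(t)=(\theta I_d+N)+M_1\tau+\dots+M_r\tau^r$, $N$ nilpotent, $M_i\in\mathrm{Mat}_d(K)$; its rank $\operatorname{rk}\Phi$ is the $\tau$-degree of $\Phi_t$. A Drinfeld module is a $\mathbf t$-module of dimension $1$, i.e. $\phi_t=\theta+\sum_{i=1}^n a_i\tau^i$. For $\mathbf t$-modules $\Phi$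 (dimension $d$) and $\Psi$ (dimension $e$), $\mathrm{Der}(\Phi,\Psi)$ is the $\mathbb F_q$-space of $\mathbb F_q$-linear maps $\delta:\mathbb F_q[t]\to\mathrm{Mat}_{e\times d}(K\{\tau\})$ with $\delta(ab)=\Psi_a\delta(b)+\delta(a)\Phi_b$; such $\delta$ is determined by $\delta(t)$, and every value of $\delta(t)$ occurs. The inner biderivations $\mathrm{Der}_{in}(\Phi,\Psi)$ are those of the form $\delta^{(U)}(a)=U\Phi_a-\Psi_aU$ with $U\in\mathrm{Mat}_{e\times d}(K\{\tau\})$. $\operatorname{Ext}^1_\tau(\Phi,\Psi)$ (the group of extensions $0\to\Psi\to X\to\Phi\to0$ of $\mathbf t$-modules with Baer sum) is identified with $\mathrm{Der}(\Phi,\Psi)/\mathrm{Der}_{in}(\Phi,\Psi)$, the class of $\delta$ corresponding to the extension with middle term $X_t=\begin{bmatrix}\Phi_t&0\\ \delta(t)&\Psi_t\end{bmatrix}$; its $\mathbb F_q[t]$-module structure is $a*[\delta]=[\Psi_a\delta]$. *)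

(* Defs.v *)
From HB Require Import structures.
From mathcomp Require Import all_boot all_order all_algebra.
Set Implicit Arguments. Unset Strict Implicit. Unset Printing Implicit Defensive.
Import GRing.Theory.
Local Open Scope ring_scope.

(* Setting: F = F_q is a finite field (q = #|F|), K a field with an embedding
   iota : F -> K (so K is an F_q-algebra of characteristic p).  A = {poly F}
   = F_q[t], and 'X : {poly F} is t.
   The twisted polynomial ring K{tau} is modelled on the coefficient type
   {poly K}: p = \sum_i p`_i tau^i, with the usual addition and the twisted
   product tmul below (tau x = x^q tau). *)

Section Twisted.
Variables (F : finFieldType) (K : fieldType) (iota : {rmorphism F -> K}).

Definition qq : nat := #|F|.

(* (sum_i a_i tau^i)(sum_j b_j tau^j) = sum_{i,j} a_i b_j^(q^i) tau^(i+j) *)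
Definition tmul (a b : {poly K}) : {poly K} :=
  \poly_(k < size a + size b)
    (\sum_(i < k.+1) a`_i * (b`_(k - i)) ^+ (qq ^ i)).

Definition tpow (a : {poly K}) (k : nat) : {poly K} := iter k (tmul a) 1.

(* The F_q-algebra homomorphism phi : F_q[t] -> K{tau} determined by
   phi_t = phit:  phi_a = \sum_i iota(a_i) phit^i. *)
Definition dmod (phit : {poly K}) (a : {poly F}) : {poly K} :=
  \sum_(i < size a) iota a`_i *: tpow phit i.

Definition is_bider (phit psit : {poly K}) (delta : {poly F} -> {poly K}) :=
  (forall (c : F) (a b : {poly F}),
      delta (c *: a + b) = iota c *: delta a + delta b) /\
  (forall a b : {poly F},
      delta (a * b) = tmul (dmod psit a) (delta b) + tmul (delta a) (dmod phit b)).

Definition is_inner (phit psit : {poly K}) (delta : {poly F} -> {poly K}) :=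
  exists U : {poly K},
    forall a : {poly F}, delta a = tmul U (dmod phit a) - tmul (dmod psit a) U.

End Twisted.

(* Main.v *)
Require Import Defs.
From HB Require Import structures.
From mathcomp Require Import all_boot all_order all_algebra.
From mathcomp Require Import all_field.
From mathcomp Require Import zify.
Set Implicit Arguments. Unset Strict Implicit. Unset Printing Implicit Defensive.
Import GRing.Theory.
Local Open Scope ring_scope.

Section Frob.
Variables (F : finFieldType) (K : fieldType) (iota : {rmorphism F -> K}).
Local Notation q := (qq F).

Lemma q_gt0 : (0 < q)%N.
Proof. by rewrite /qq; apply/card_gt0P; exists 0. Qed.

Lemma qpow_gt0 i : (0 < q ^ i)%N.
Proof. by rewrite expn_gt0 q_gt0. Qed.

Lemma q_natK i : ([char K]%R).-nat (q ^ i)%N.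
Proof.
have [p pr pF] := finPcharP F.
have pK := rmorph_pchar iota pF.
have -> : q = (p ^ logn p #|F|)%N by rewrite /qq; exact: (card_pprimeChar pF).
by rewrite -expnM pnatX (pnatE _ pr) pK.
Qed.

Lemma frD i (x y : K) : (x + y) ^+ (q ^ i) = x ^+ (q ^ i) + y ^+ (q ^ i).
Proof. exact: exprDn_pchar (q_natK i). Qed.

Lemma fr0 i : (0 : K) ^+ (q ^ i) = 0.
Proof. by rewrite expr0n eqn0Ngt qpow_gt0. Qed.

Lemma frN i (x : K) : (- x) ^+ (q ^ i) = - x ^+ (q ^ i).
Proof. by apply/eqP; rewrite -subr_eq0 opprK -frD addNr fr0. Qed.

Lemma fr_sum i (I : Type) (r : seq I) (P : pred I) (G : I -> K) :
  (\sum_(j <- r | P j) G j) ^+ (q ^ i) = \sum_(j <- r | P j) G j ^+ (q ^ i).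
Proof. by elim/big_rec2: _ => [|j a b _ <-]; rewrite ?fr0 ?frD. Qed.

Lemma frfr i j (x : K) : (x ^+ (q ^ i)) ^+ (q ^ j) = x ^+ (q ^ (i + j)).
Proof. by rewrite -exprM -expnD. Qed.

Lemma fr_iota i (c : F) : iota c ^+ (q ^ i) = iota c.
Proof.
elim: i => [|i IH]; first by rewrite expn0 expr1.
by rewrite expnSr exprM IH -rmorphXn /qq expf_card.
Qed.

End Frob.


Section Tw.
Variables (F : finFieldType) (K : fieldType) (iota : {rmorphism F -> K}).
Local Notation Q := (qq F).
Local Notation tm := (@tmul F K).

Lemma coef_tmul (a b : {poly K}) k :
  (tm a b)`_k = \sum_(j < k.+1) a`_j * b`_(k - j) ^+ (Q ^ j).
Proof.
rewrite /tmul coef_poly; case: ltnP => // le; rewrite big1 // => j _.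
have [h|h] := leqP (size a) j; first by rewrite nth_default ?mul0r.
rewrite [b`_ _]nth_default ?fr0 ?mulr0 //. move: h le; case: j => j /= _; set sa := size a; set sb := size b; lia.
Qed.

Lemma coef_tmul_rev (a b : {poly K}) k :
  (tm a b)`_k = \sum_(j < k.+1) a`_(k - j) * b`_j ^+ (Q ^ (k - j)).
Proof.
rewrite coef_tmul (reindex_inj rev_ord_inj) /=.
by apply: eq_bigr => j _; rewrite (sub_ordK j).
Qed.

Lemma tmulA : associative tm.
Proof.
move=> a b c; apply/polyP=> i; rewrite coef_tmul coef_tmul_rev.
pose coef3 j k := a`_j * (b`_(i - j - k) ^+ (Q ^ j) * c`_k ^+ (Q ^ (i - k))).
transitivity (\sum_(j < i.+1) \sum_(k < i.+1 | (k <= i - j)%N) coef3 j k).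
  apply: eq_bigr => /= j _; rewrite coef_tmul_rev (fr_sum iota) big_distrr /=.
  rewrite (big_ord_narrow_leq (leq_subr _ _)) /=; apply: eq_bigr => k _.
  rewrite /coef3 exprMn !frfr; congr (_ * (_ * _ ^+ (Q ^ _))).
  have := ltn_ord k; have := ltn_ord j; lia.
rewrite (exchange_big_dep predT) //=; apply: eq_bigr => k _.
transitivity (\sum_(j < i.+1 | (j <= i - k)%N) coef3 j k).
  apply: eq_bigl => j; have := ltn_ord k; have := ltn_ord j.
  move=> hj hk; apply/idP/idP => /leP h; apply/leP; lia.
rewrite (big_ord_narrow_leq (leq_subr _ _)) coef_tmul big_distrl /=.
by apply: eq_bigr => j _; rewrite /coef3 mulrA; congr (_ * _ * _); rewrite subnAC.
Qed.

Lemma tmul1l : left_id 1 tm.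
Proof.
move=> b; apply/polyP => i; rewrite coef_tmul big_ord_recl subn0 coefC /= expn0 expr1 mul1r.
by rewrite big1 ?addr0 // => j _; rewrite coefC /= mul0r.
Qed.

Lemma tmul1r : right_id 1 tm.
Proof.
move=> b; apply/polyP => i; rewrite coef_tmul_rev big_ord_recl subn0 coefC /= expr1n mulr1.
by rewrite big1 ?addr0 // => j _; rewrite coefC /= fr0 mulr0.
Qed.

Lemma tmulDl : left_distributive tm +%R.
Proof.
move=> a b c; apply/polyP => i; rewrite coefD !coef_tmul -big_split /=.
by apply: eq_bigr => j _; rewrite coefD mulrDl.
Qed.

Lemma tmulDr : right_distributive tm +%R.
Proof.
move=> a b c; apply/polyP => i; rewrite coefD !coef_tmul -big_split /=.
by apply: eq_bigr => j _; rewrite coefD (frD iota) mulrDr.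
Qed.

Lemma oner_neq0' : (1 : {poly K}) != 0.
Proof. exact: oner_neq0. Qed.

End Tw.


Section Ring.
Variables (F : finFieldType) (K : fieldType) (iota : {rmorphism F -> K}).
Local Notation Q := (qq F).

Definition tw of {rmorphism F -> K} : Type := {poly K}.
Local Notation T := (tw iota).

HB.instance Definition _ := GRing.Zmodule.on T.
HB.instance Definition _ := GRing.Zmodule_isNzRing.Build T
  (tmulA iota) (@tmul1l F K) (@tmul1r F K) (@tmulDl F K) (tmulDr iota) (oner_neq0' K).

Lemma tmulE (a b : {poly K}) : tmul F a b = ((a : T) * (b : T) : T).
Proof. by []. Qed.

Lemma tpowE (a : {poly K}) k : tpow F a k = ((a : T) ^+ k : T).
Proof. by elim: k => [|k IH] //=; rewrite exprS -IH. Qed.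

Lemma tmulCr (p : {poly K}) (c : F) : tmul F p (iota c)%:P = iota c *: p.
Proof.
apply/polyP => k; rewrite coef_tmul_rev big_ord_recl subn0 coefC /= (fr_iota iota) coefZ mulrC.
by rewrite big1 ?addr0 // => j _; rewrite coefC /= (fr0 F) mulr0.
Qed.

Lemma tmulCl (p : {poly K}) (c : F) : tmul F (iota c)%:P p = iota c *: p.
Proof.
apply/polyP => k; rewrite coef_tmul big_ord_recl subn0 coefC /= expn0 expr1 coefZ.
by rewrite big1 ?addr0 // => j _; rewrite coefC /= mul0r.
Qed.

Definition cst (c : F) : T := (iota c)%:P.

Fact cst_zmod : GRing.zmod_morphism cst.
Proof. by move=> x y; rewrite /cst rmorphB polyCB. Qed.
Fact cst_monoid : GRing.monoid_morphism cst.
Proof.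
split; first by rewrite /cst rmorph1.
by move=> x y; rewrite /cst -tmulE tmulCl rmorphM polyCM mul_polyC.
Qed.
HB.instance Definition _ := GRing.isZmodMorphism.Build F T cst cst_zmod.
HB.instance Definition _ := GRing.isMonoidMorphism.Build F T cst cst_monoid.

Lemma cst_central (p : T) (c : F) : GRing.comm p (cst c).
Proof. by rewrite /GRing.comm /cst -!tmulE tmulCl tmulCr. Qed.

Lemma cstM (p : T) (c : F) : cst c * p = iota c *: (p : {poly K}).
Proof. by rewrite /cst -tmulE tmulCl. Qed.

Definition hm (u : T) := horner_morph (fun c => cst_central u c).

Lemma dmodE (phit : {poly K}) a : dmod iota phit a = hm phit a.
Proof.
rewrite /hm /horner_morph horner_coef size_map_poly /dmod.
by apply: eq_bigr => i _; rewrite coef_map /= cstM tpowE.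
Qed.

End Ring.


Section Mx.
Variables (F : finFieldType) (K : fieldType) (iota : {rmorphism F -> K}).
Local Notation T := (tw iota).
Local Notation cst := (cst iota).

Definition cst2 (c : F) : 'M[T]_2 := (cst c)%:M.

Fact cst2_zmod : GRing.zmod_morphism cst2.
Proof. by move=> x y; rewrite /cst2 rmorphB raddfB. Qed.
Fact cst2_monoid : GRing.monoid_morphism cst2.
Proof.
split; first by rewrite /cst2 rmorph1.
by move=> x y; rewrite /cst2 rmorphM scalar_mxM.
Qed.
HB.instance Definition _ := GRing.isZmodMorphism.Build F 'M[T]_2 cst2 cst2_zmod.
HB.instance Definition _ := GRing.isMonoidMorphism.Build F 'M[T]_2 cst2 cst2_monoid.

Lemma cst2_central (A : 'M[T]_2) (c : F) : GRing.comm A (cst2 c).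
Proof.
rewrite /GRing.comm /cst2 -!mulmxE; apply/matrixP => i j; rewrite !mxE /scalar_mx.
rewrite (bigD1 j) //= [in RHS](bigD1 i) //= !mxE !eqxx /= !mulr1n.
rewrite big1 => [|k /negbTE nk]; last by rewrite mxE nk mulr0n mulr0.
rewrite big1 => [|k /negbTE nk]; last by rewrite mxE eq_sym nk mulr0n mul0r.
by rewrite !addr0 cst_central.
Qed.

Definition i1 : 'I_2 := ord_max.

Definition umx (phit psit w : T) : 'M[T]_2 :=
  \matrix_(i, j) if i == ord0 then (if j == ord0 then phit else 0)
                 else (if j == ord0 then w else psit).

Definition gm (phit psit w : T) := horner_morph (fun c => cst2_central (umx phit psit w) c).

Definition fd (phit psit w : T) (a : {poly F}) : T := gm phit psit w a i1 ord0.

Lemma hmXC (u : T) a c : hm u (a * 'X + c%:P) = hm u a * u + cst c.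
Proof. by rewrite /hm rmorphD rmorphM /= horner_morphX horner_morphC. Qed.

Lemma gmXC phit psit w a c :
  gm phit psit w (a * 'X + c%:P) = gm phit psit w a * umx phit psit w + cst2 c.
Proof. by rewrite /gm rmorphD rmorphM /= horner_morphX horner_morphC. Qed.

Lemma hm0 (u : T) : hm u 0 = 0.
Proof. by rewrite /hm rmorph0. Qed.

Lemma gm0 phit psit w : gm phit psit w 0 = 0.
Proof. by rewrite /gm rmorph0. Qed.

Lemma mxE2 (A B : 'M[T]_2) i j : (A * B) i j = A i ord0 * B ord0 j + A i i1 * B i1 j.
Proof.
rewrite -mulmxE !mxE !big_ord_recl big_ord0 addr0.
by have -> : lift ord0 ord0 = i1 :> 'I_2 by apply: val_inj.
Qed.

Lemma gm_entries phit psit w a :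
  [/\ gm phit psit w a ord0 ord0 = hm phit a,
      gm phit psit w a ord0 i1 = 0 &
      gm phit psit w a i1 i1 = hm psit a].
Proof.
elim/poly_ind: a => [|a c [IH1 IH2 IH3]].
  by rewrite gm0 !hm0; split; rewrite mxE.
rewrite gmXC !hmXC; split; rewrite mxE mxE2 ?IH1 ?IH2 ?IH3 /umx /cst2 /scalar_mx !mxE /=;
  by rewrite ?(mul0r, mulr0, addr0, add0r, mulr1n, mulr0n).
Qed.

Lemma fdXC phit psit w a c :
  fd phit psit w (a * 'X + c%:P) = fd phit psit w a * phit + hm psit a * w.
Proof.
have [_ _ E] := gm_entries phit psit w a.
rewrite /fd gmXC mxE mxE2 E /umx /cst2 /scalar_mx !mxE /=.
by rewrite ?(mul0r, mulr0, addr0, add0r, mulr1n, mulr0n).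
Qed.

Lemma fd0 phit psit w : fd phit psit w 0 = 0.
Proof. by rewrite /fd gm0 mxE. Qed.

Lemma fdX phit psit w : fd phit psit w 'X = w.
Proof. by rewrite /fd /gm horner_morphX /umx mxE. Qed.

Lemma fdM phit psit w a b :
  fd phit psit w (a * b) = hm psit a * fd phit psit w b + fd phit psit w a * hm phit b.
Proof.
have [E1 E2 E3] := gm_entries phit psit w a.
have [F1 F2 F3] := gm_entries phit psit w b.
by rewrite /fd {1}/gm rmorphM /= mxE2 -/(gm _ _ _ a) -/(gm _ _ _ b) F1 E3 addrC.
Qed.

Lemma fdZ phit psit w (c : F) a b :
  fd phit psit w (c *: a + b) = cst c * fd phit psit w a + fd phit psit w b.
Proof.
rewrite /fd {1}/gm rmorphD /= -mul_polyC rmorphM /= horner_morphC -/(gm _ _ _ a) -/(gm _ _ _ b).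
by rewrite mxE mxE2 /cst2 /scalar_mx !mxE /= mulr0n mul0r add0r mulr1n.
Qed.
End Mx.


Section Deg.
Variables (F : finFieldType) (K : fieldType) (iota : {rmorphism F -> K}).
Local Notation Q := (qq F).
Local Notation tm := (@tmul F K).

Lemma coef_tmul_hi (a b : {poly K}) k :
  ((size a).-1 + (size b).-1 < k)%N -> (tm a b)`_k = 0.
Proof.
move=> hk; rewrite coef_tmul big1 // => j _.
have [h|h] := leqP (size a) j; first by rewrite nth_default ?mul0r.
rewrite [b`_ _]nth_default ?(fr0 F) ?mulr0 //.
move: h hk; case: j => j /= _; set sa := size a; set sb := size b; lia.
Qed.

Lemma coef_tmul_top (a b : {poly K}) :
  (tm a b)`_((size a).-1 + (size b).-1) = lead_coef a * lead_coef b ^+ (Q ^ (size a).-1).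
Proof.
set k := ((size a).-1 + (size b).-1)%N.
have hk : ((size a).-1 < k.+1)%N by rewrite /k; lia.
rewrite coef_tmul (bigD1 (Ordinal hk)) //= big1 ?addr0.
  by rewrite /lead_coef /k addKn.
move=> [j hj] /= hne.
have hne' : j != (size a).-1 by apply: contra hne => /eqP e; apply/eqP/val_inj.
have [h|h] := leqP (size a) j; first by rewrite nth_default ?mul0r.
rewrite [b`_ _]nth_default ?(fr0 F) ?mulr0 //.
clear hne; move: h hne' hj; rewrite /k; set sa := size a; set sb := size b => h /eqP hne' hj; lia.
Qed.

Lemma tmul0l (b : {poly K}) : tm 0 b = 0.
Proof. by apply/polyP => k; rewrite coef_tmul coef0 big1 // => j _; rewrite coef0 mul0r. Qed.


Lemma tmul0r (b : {poly K}) : tm b 0 = 0.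
Proof. by apply/polyP => k; rewrite coef_tmul coef0 big1 // => j _; rewrite coef0 (fr0 F) mulr0. Qed.

Lemma size_le_coef (w : {poly K}) j : (size w <= j)%N -> w`_j = 0.
Proof. exact: nth_default. Qed.

Lemma inner_inj (phit psit U w : {poly K}) :
  (size psit < size phit)%N -> (size w <= (size phit).-1)%N ->
  w = tm U phit - tm psit U -> U = 0.
Proof.
move=> hrk hw E; apply/eqP; apply/negPn/negP => nzU.
have nzphi : phit != 0 by rewrite -size_poly_gt0; lia.
set k := ((size U).-1 + (size phit).-1)%N.
have : w`_k = 0 by apply: size_le_coef; rewrite /k; lia.
rewrite E coefB coef_tmul_top.
have -> : (tm psit U)`_k = 0.
  have [->|nzpsi] := eqVneq psit 0; first by rewrite tmul0l coef0.
  apply: coef_tmul_hi; move: nzpsi; rewrite -size_poly_gt0 /k => h.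
  move: h hrk; set a := size psit; set b := size phit; set c := size U; lia.
rewrite subr0 => /eqP; rewrite mulf_eq0 expf_eq0 !lead_coef_eq0 (negbTE nzU) (negbTE nzphi).
by rewrite andbF.
Qed.

Lemma division (phit psit : {poly K}) :
  (size psit < size phit)%N -> forall w : {poly K},
  exists r U : {poly K}, (size r <= (size phit).-1)%N /\
     w = r + (tm U phit - tm psit U).
Proof.
move=> hrk w.
have nzphi : phit != 0 by rewrite -size_poly_gt0; lia.
elim: {w}(size w).+1 {-2}w (ltnSn (size w)) => // m IH w Hw.
have [hs|hs] := leqP (size w) (size phit).-1.
  by exists w, 0; split => //; rewrite tmul0l tmul0r subrr addr0.
set d := (size w - size phit)%N.
set c := lead_coef w / lead_coef phit ^+ (Q ^ d).
have nzw : w != 0 by rewrite -size_poly_gt0; lia.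
have nzl : lead_coef phit ^+ (Q ^ d) != 0 by rewrite expf_eq0 lead_coef_eq0 (negbTE nzphi) andbF.
have nzc : c != 0 by rewrite /c mulf_eq0 invr_eq0 negb_or nzl lead_coef_eq0 nzw.
set U0 := c *: 'X^d.
have sU0 : size U0 = d.+1 by rewrite /U0 size_scale // size_polyXn.
have lU0 : lead_coef U0 = c by rewrite /U0 lead_coefZ lead_coefXn mulr1.
set w' := w - (tm U0 phit - tm psit U0).
have hw' : (size w' <= (size w).-1)%N.
  apply/leq_sizeP => j hj; rewrite /w' !coefB.
  have -> : (tm psit U0)`_j = 0.
    have [->|nzpsi] := eqVneq psit 0; first by rewrite tmul0l coef0.
    apply: coef_tmul_hi; move: nzpsi; rewrite -size_poly_gt0 sU0 /d => h.
    move: h hrk hs hj; set a := size psit; set b := size phit; set e := size w; lia.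
  rewrite subr0.
  have [hj'|hj'] := ltnP (size w).-1 j.
    rewrite size_le_coef; last by lia.
    rewrite coef_tmul_hi ?subrr // sU0 /d.
    move: hs hj'; set b := size phit; set e := size w; lia.
  have -> : j = ((size U0).-1 + (size phit).-1)%N.
    rewrite sU0 /d; move: hs hj hj'; set b := size phit; set e := size w; lia.
  rewrite coef_tmul_top lU0 sU0 /= /c mulfVK //.
  have -> : (d + (size phit).-1)%N = (size w).-1.
    rewrite /d; move: hs; set b := size phit; set e := size w; lia.
  by rewrite /lead_coef subrr.
have hlt : (size w' < m)%N.
  move: hw' Hw hs; set e := size w; set e' := size w'; set b := size phit; lia.
have [r [U [hr E]]] := IH w' hlt.
exists r, (U + U0); split => //.
rewrite -[w](subrK (tm U0 phit - tm psit U0)) -/w' E.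
rewrite !(tmulE iota) mulrDl mulrDr opprD addrACA -!addrA; congr (_ + _).
by rewrite !addrA; congr (_ + _ + _); rewrite addrC.
Qed.
End Deg.


Section Main.
Variables (F : finFieldType) (K : fieldType) (iota : {rmorphism F -> K}).
Local Notation T := (tw iota).
Local Notation cst := (cst iota).
Variables (phit psit : T).
Local Notation fd := (fd phit psit).

Lemma fd_lin (c : F) (w1 w2 : T) a :
  fd (cst c * w1 + w2) a = cst c * fd w1 a + fd w2 a.
Proof.
elim/poly_ind: a => [|a d IH]; first by rewrite !fd0 mulr0 addr0.
rewrite !fdXC IH mulrDl mulrDr !mulrDr !mulrA (cst_central _ c).
rewrite -!mulrA -!addrA; congr (_ + _); rewrite !addrA; congr (_ + _).
by rewrite addrC.
Qed.

Lemma fd_inner (U : T) a :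
  fd (U * phit - psit * U) a = U * hm phit a - hm psit a * U.
Proof.
elim/poly_ind: a => [|a d IH]; first by rewrite fd0 !hm0 mulr0 mul0r subr0.
rewrite fdXC !hmXC IH mulrBl mulrBr mulrDr mulrDl (cst_central U d).
rewrite !mulrA -!mulrA.
by rewrite addrA subrK opprD addrACA subrr addr0.
Qed.

Lemma bider_fd (delta : {poly F} -> {poly K}) :
  is_bider iota phit psit delta -> forall a, delta a = fd (delta 'X) a.
Proof.
move=> [Hl Hm].
have d0 : delta 0 = 0.
  by have := Hl (-1) 1 1; rewrite scaleN1r addNr rmorphN1 scaleN1r addNr.
have d1 : delta 1 = 0.
  have := Hm 1 1; rewrite mulr1 !dmodE /hm !rmorph1 !(tmulE iota) mul1r mulr1.
  by move=> h; apply: (@addrI _ (delta 1)); rewrite addr0 -h.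
elim/poly_ind => [|a c IH]; first by rewrite d0 fd0.
rewrite fdXC -IH -[c%:P]mulr1 mul_polyC addrC Hl d1 scaler0 add0r.
by rewrite Hm !dmodE /hm horner_morphX !(tmulE iota) addrC.
Qed.

End Main.

Theorem lemma3p1 (F : finFieldType) (K : fieldType) (iota : {rmorphism F -> K})
    (theta : K) (phit psit : {poly K})
    (Hphi : phit`_0 = theta) (Hpsi : psit`_0 = theta)
    (Hrk : (size psit < size phit)%N) :
  let n := (size phit).-1 in
  exists f : {poly K} -> {poly F} -> {poly K},
    (forall w : {poly K}, is_bider iota phit psit (f w) /\ f w 'X = w) /\
    (forall (c : F) (w1 w2 : {poly K}) (a : {poly F}),
        f (iota c *: w1 + w2) a = iota c *: f w1 a + f w2 a) /\
    (forall w : {poly K}, (size w <= n)%N -> is_inner iota phit psit (f w) -> w = 0) /\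
    (forall delta : {poly F} -> {poly K}, is_bider iota phit psit delta ->
        exists w : {poly K}, (size w <= n)%N /\
          is_inner iota phit psit (fun a => delta a - f w a)).
Proof.
move=> n.
exists (fun w a => fd (phit : tw iota) (psit : tw iota) (w : tw iota) a).
split; [|split; [|split]].
- move=> w; split; last exact: fdX.
  split.
    by move=> c a b; rewrite fdZ cstM.
  by move=> a b; rewrite fdM !dmodE !(tmulE iota) addrC.
- by move=> c w1 w2 a; rewrite -!cstM fd_lin.
- move=> w hw [U HU].
  have := HU 'X; rewrite fdX !dmodE /hm !horner_morphX => E.
  have U0 := inner_inj Hrk hw E.
  by rewrite E U0 tmul0l tmul0r subrr.
- move=> delta Hd.
  have [r [U [hr E]]] := division iota Hrk (delta 'X).
  exists r; split => //; exists U => a.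
  rewrite (bider_fd Hd a) E.
  have -> : forall w1 w2 : tw iota, fd phit psit (w1 + w2) a - fd phit psit w1 a = fd phit psit w2 a.
    move=> w1 w2; have := fd_lin phit psit 1 w1 w2 a.
    by rewrite rmorph1 !mul1r => ->; rewrite addrC addKr.
  by rewrite !(tmulE iota) fd_inner !dmodE.
Qed.
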